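(* Let $\lambda>0$ and integers $p\ge0$, $0\le k\le p+1$. Then $\{h^\lambda_{j,p}:0\le j<k\}$ is a basis of $V_{k,\lambda}(p)$, where $h^\lambda_{j,p}(z,w)=\sum_{j\le i\le p}\binom ij\binom{p-i+\lambda-1}{p-i}z^iw^{p-i}$.
   Context: For $\lambda>0$, $\mathcal H^{(\lambda)}$ is the Hilbert space of holomorphic functions on $\mathbb D$ with reproducing kernel $(1-z\bar w)^{-\lambda}$, and $H^2$ the Hardy space. $\mathcal H^{(\lambda)}\otimes H^2$ is identified with a Hilbert space of holomorphic functions on $\mathbb D^2$ via $f\otimes g\mapsto((z,w)\mapsto g(z)f(w))$. $Hom(p)$ is the space of homogeneous polynomials of degree $p$ in $z,w$, so that $\mathcal H^{(\lambda)}\otimes H^2=\bigoplus_{p\ge0}Hom(p)$ orthogonally. Let $\triangle=\{(z,z):z\in\mathbb D\}$. $V_{k,\lambda}$ is the orthogonal complement in $\mathcal H^{(\lambda)}\otimes H^2$ of the set of all $h\in\mathcal H^{(\lambda)}\otimes H^2$ vanishing to order $\ge k$ on $\triangle$ (i.e. all partial derivatives of $h$ of order $<k$ vanish on $\triangle$), and $V_{k,\lambda}(p)=Hom(p)\cap V_{k,\lambda}$. *)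

(* Defs.v *)
From HB Require Import structures.
From mathcomp Require Import all_boot all_order all_algebra.
From mathcomp Require Import complex.
From mathcomp Require Import reals.
Set Implicit Arguments. Unset Strict Implicit. Unset Printing Implicit Defensive.
Import Order.TTheory GRing.Theory Num.Theory.
Local Open Scope ring_scope.

Section Defs.
Variable R : realType.
Local Notation C := R[i].

Definition gbinom (x : R) (m : nat) : R :=
  (\prod_(l < m) (x - l%:R)) / (m`!)%:R.

(* ||w^m||^2 in H^(lam): the kernel (1 - z conj w)^(-lam)
   = sum_m binom(m+lam-1, m) (z conj w)^m, so ||w^m||^2 = 1/binom(m+lam-1,m). *)
Definition wnorm2 (lam : R) (m : nat) : R :=
  (gbinom (m%:R + lam - 1) m)^-1.

(* A holomorphic function on D^2 given by its Taylor coefficients: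
   c i j = coefficient of z^i w^j  (z: the H^2 variable, w: the H^(lam) one).
   ||z^i w^j||^2 = ||z^i||^2_{H^2} ||w^j||^2_{H^(lam)} = wnorm2 lam j. *)
Definition coefs := nat -> nat -> C.

(* membership in H^(lam) (x) H^2 : sum_{i,j} |c i j|^2 ||z^i w^j||^2 < oo
   (nonnegative double series: bounded partial sums). *)
Definition in_space (lam : R) (c : coefs) : Prop :=
  exists M : R, forall N : nat,
    \sum_(i < N) \sum_(j < N) `|c i j| ^+ 2 * real_complex R (wnorm2 lam j) <= real_complex R M.

(* h vanishes to order >= k on the diagonal: for every a + b < k,
   (d/dz)^a (d/dw)^b h (z,z) = 0 on D, i.e. every Taylor coefficient of
   z |-> sum_{i,j} c_{i+a,j+b} (i+a)^_a (j+b)^_b z^(i+j) vanishes. *)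
Definition vanishes_on_diag (k : nat) (c : coefs) : Prop :=
  forall a b : nat, (a + b < k)%N -> forall n : nat,
    \sum_(i < n.+1)
       c (i + a)%N (n - i + b)%N * ((i + a) ^_ a)%:R * ((n - i + b) ^_ b)%:R
    = 0.

(* An element of Hom(p): q 0 i is the coefficient of z^i w^(p-i). *)
Definition homp (p : nat) := 'rV[C]_(p.+1).

(* <q, h> for q in Hom(p) and h in the space (only the degree-p part of h
   contributes, so the series is this finite sum). *)
Definition inner_hom (lam : R) (p : nat) (q : homp p) (h : coefs) : C :=
  \sum_(i < p.+1) q 0 i * (h i (p - i)%N)^* * real_complex R (wnorm2 lam (p - i)).

(* q in V_{k,lam}(p) = Hom(p) /\ (orthogonal complement of the functions
   vanishing to order >= k on the diagonal). *)
Definition in_Vkp (lam : R) (k p : nat) (q : homp p) : Prop :=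
  forall h : coefs, in_space lam h -> vanishes_on_diag k h -> inner_hom lam q h = 0.

Definition hjp (lam : R) (j p : nat) : homp p :=
  \row_(i < p.+1)
    real_complex R (('C(i, j))%:R * gbinom ((p - i)%:R + lam - 1) (p - i)).

End Defs.

(* Main.v *)
Require Import Defs.
From HB Require Import structures.
From mathcomp Require Import all_boot all_order all_algebra.
From mathcomp Require Import complex.
From mathcomp Require Import reals.
From mathcomp Require Import zify ring lra.
Import Order.TTheory GRing.Theory Num.Theory.
Local Open Scope ring_scope.
Set Implicit Arguments. Unset Strict Implicit.
Section Poly.
Variable F : fieldType.

Lemma size_shift_diff (P : {poly F}) k :
  (size P <= k.+1)%N -> (size (P - (P \Po ('X + 1%:P)))%R <= k)%N.
Proof.
move=> hP; apply/leq_sizeP => j hj. rewrite coefB.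
have sz : size (P \Po ('X + 1%:P)) = size P by rewrite size_comp_poly2 // size_XaddC.
have [hs|hs] := leqP (size P) j.
  by rewrite !nth_default ?subr0 // sz.
have ej : j = (size P).-1 by lia.
have := lead_coef_comp P (q:='X + 1%:P); rewrite size_XaddC lead_coefXaddC expr1n mulr1 => /(_ isT).
by rewrite !lead_coefE sz -ej => ->; rewrite subrr.
Qed.

Lemma alt_poly k (P : {poly F}) m : (size P <= k)%N ->
  \sum_(0 <= t < k.+1) (-1) ^+ t * ('C(k, t))%:R * P.[(t + m)%:R] = 0.
Proof.
elim: k P m => [|k IH] P m hP.
  move: hP; rewrite leqn0 size_poly_eq0 => /eqP ->.
  by rewrite big_nat1 horner0 !mulr0.
have := IH (P - (P \Po ('X + 1%:P))) m (size_shift_diff hP).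
move=> E; apply: (etrans _ E).
under [RHS]eq_bigr => i _ do rewrite hornerD hornerN horner_comp !hornerE mulrBr.
rewrite big_split sumrN.
rewrite [LHS]big_nat_recl // expr0 bin0 mul1r add0n.
under eq_bigr => i _ do rewrite binS natrD mulrDr mulrDl.
rewrite big_split addrA; congr (_ + _).
  rewrite [RHS]big_nat_recl // expr0 bin0 mul1r add0n; congr (_ + _).
  by rewrite big_nat_recr //= bin_small // mulr0 mul0r addr0.
rewrite -sumrN; apply: eq_bigr => i _.
by rewrite exprS mulN1r !mulNr addSn -natr1.
Qed.

Lemma ffact_F (n b : nat) : ((n ^_ b)%:R : F) = \prod_(0 <= l < b) (n%:R - l%:R).
Proof.
elim: b => [|b IH]; first by rewrite big_nil.
rewrite ffactnSr natrM big_nat_recr //= -IH.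
have [hb|hb] := leqP b n; first by rewrite natrB.
by rewrite ffact_small // !mul0r.
Qed.

Lemma size_prod2 (s : seq nat) (G : nat -> {poly F}) :
  (forall l, size (G l) <= 2)%N -> (size (\prod_(l <- s) G l)%R <= (size s).+1)%N.
Proof.
move=> hG; elim: s => [|x s IH]; first by rewrite big_nil size_poly1.
rewrite big_cons (leq_trans (size_polyMleq _ _)) //=.
apply: leq_trans (_ : (2 + (size s).+1).-1 <= _)%N => //.
by rewrite -!subn1 leq_sub2r // leq_add.
Qed.

Definition ffpol (a b p : nat) : {poly F} :=
  \prod_(0 <= l < a) ('X - (l%:R)%:P) * \prod_(0 <= l < b) ((p%:R - l%:R)%:P - 'X).

Lemma ffpol_size a b p : (size (ffpol a b p) <= (a + b).+1)%N.
Proof.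
rewrite /ffpol (leq_trans (size_mul_leq _ _)) //.
have h1 := @size_prod2 (index_iota 0 a) (fun l => 'X - (l%:R)%:P).
have h2 := @size_prod2 (index_iota 0 b) (fun l => (p%:R - l%:R)%:P - 'X).
rewrite !size_iota !subn0 in h1 h2.
have hA := h1 (fun l => eq_leq (size_XsubC _)).
have hB2 : forall l : nat, (size ((p%:R - l%:R)%:P - 'X : {poly F})%R <= 2)%N.
  by move=> l; rewrite -opprB size_polyN size_XsubC.
have hB := h2 hB2.
apply: leq_trans (_ : (a.+1 + b.+1).-1 <= _)%N; last by rewrite addSn addnS.
by rewrite -!subn1 leq_sub2r // leq_add.
Qed.

Lemma ffpol_eval a b p x : (x <= p)%N ->
  (ffpol a b p).[x%:R] = (x ^_ a)%:R * ((p - x) ^_ b)%:R.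
Proof.
move=> hx; rewrite /ffpol hornerM !horner_prod !ffact_F natrB //.
congr (_ * _); apply: eq_bigr => l _; rewrite !hornerE //.
by rewrite addrAC.
Qed.
End Poly.

Section Main.
Variable R : realType.
Local Notation C := R[i].
Local Notation rc := (real_complex R).
Variable lam : R.
Hypothesis hlam : 0 < lam.

Definition gg (m : nat) : R := gbinom (m%:R + lam - 1) m.

Lemma gg_gt0 m : 0 < gg m.
Proof.
rewrite /gg /gbinom divr_gt0 ?ltr0n ?fact_gt0 //.
apply: prodr_gt0 => l _.
have hl := ltn_ord l.
have e : (m%:R : R) = (m - l.+1)%:R + l%:R + 1.
  by rewrite -natrD natr1; congr _%:R; lia.
have hx : 0 <= ((m - l.+1)%:R : R) := ler0n _ _.
rewrite e (_ : forall a b : R, a + b + 1 + lam - 1 - b = a + lam); last by move=> a b; ring.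
by apply: ltr_wpDl.
Qed.

Lemma wn_ge0 m : 0 <= wnorm2 lam m.
Proof. by rewrite /wnorm2 -/(gg m) invr_ge0 ltW // gg_gt0. Qed.

Lemma ggw m : rc (gg m) * rc (wnorm2 lam m) = 1 :> C.
Proof.
by rewrite -rmorphM /= /wnorm2 -/(gg m) mulfV ?rmorph1 // gt_eqF // gg_gt0.
Qed.

Lemma wn_neq0 m : rc (wnorm2 lam m) != 0 :> C.
Proof.
apply/eqP => h; have := ggw m; rewrite h mulr0 => /eqP; rewrite eq_sym oner_eq0.
by [].
Qed.

Lemma Re_ge0 (z : C) : 0 <= z -> rc (complex.Re z) = z.
Proof. by case: z => x y; rewrite lecE /= => /andP[/eqP -> _]. Qed.

Lemma trunc_sum (f : nat -> C) B : (forall i, (B < i)%N -> f i = 0) ->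
  forall N, \sum_(i < N) f i = \sum_(i < minn N B.+1) f i.
Proof.
move=> hf N; case: (leqP N B.+1) => h; first by [].
rewrite (big_ord_widen N f (ltnW h)).
rewrite [LHS](bigID (fun i : 'I_N => (i < B.+1)%N)) /= [X in _ + X]big1 ?addr0 //.
by move=> i; rewrite -leqNgt => hi; apply: hf.
Qed.

Lemma mono_sum (f : nat -> C) N1 N2 : (forall i, 0 <= f i) -> (N1 <= N2)%N ->
  \sum_(i < N1) f i <= \sum_(i < N2) f i.
Proof.
move=> hf h; rewrite (big_ord_widen N2 f h).
rewrite [X in _ <= X](bigID (fun i : 'I_N2 => (i < N1)%N)) /= lerDl.
by apply: sumr_ge0 => i _.
Qed.

Lemma box_space (c : coefs R) B :
  (forall x y, (B < x)%N || (B < y)%N -> c x y = 0) -> in_space lam c.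
Proof.
move=> hc.
pose T := fun i j => `|c i j| ^+ 2 * real_complex R (wnorm2 lam j).
have T0 : forall i j, 0 <= T i j.
  by move=> i j; rewrite mulr_ge0 ?exprn_ge0 ?normr_ge0 // ler0c wn_ge0.
have Tz : forall i j, (B < i)%N || (B < j)%N -> T i j = 0.
  by move=> i j h; rewrite /T hc // normr0 expr0n /= mul0r.
pose S := \sum_(i < B.+1) \sum_(j < B.+1) T i j.
have S0 : 0 <= S by apply: sumr_ge0 => i _; apply: sumr_ge0.
exists (complex.Re S); rewrite Re_ge0 // => N.
have -> : (\sum_(i < N) \sum_(j < N) `|c i j| ^+ 2 * real_complex R (wnorm2 lam j))
   = \sum_(i < N) \sum_(j < N) T i j by [].
rewrite (trunc_sum (f := fun i => \sum_(j < N) T i j) (B := B)); last first.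
  by move=> i hi; rewrite big1 // => j _; apply: Tz; rewrite hi.
apply: le_trans (_ : \sum_(i < minn N B.+1) \sum_(j < B.+1) T i j <= S).
  apply: ler_sum => i _.
  rewrite (trunc_sum (f := fun j => T i j) (B := B)); last first.
    by move=> j hj; apply: Tz; rewrite hj orbT.
  by apply: mono_sum => //; apply: geq_minr.
apply: (mono_sum (f := fun i => \sum_(j < B.+1) T i j)); last exact: geq_minr.
by move=> i; apply: sumr_ge0.
Qed.

Variables p k : nat.
Hypothesis hk : (k <= p.+1)%N.

Definition ecoord (q : homp R p) (x : nat) : C :=
  q 0 (inord x) * rc (wnorm2 lam (p - x)).

Lemma inner_nat q h :
  inner_hom lam q h = \sum_(0 <= i < p.+1) ecoord q i * (h i (p - i)%N)^*.
Proof.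
by rewrite big_mkord; apply: eq_bigr => i _; rewrite /ecoord inord_val mulrAC.
Qed.

Lemma inner_lin a (q1 q2 : homp R p) h :
  inner_hom lam (a *: q1 + q2) h = a * inner_hom lam q1 h + inner_hom lam q2 h.
Proof.
rewrite /inner_hom mulr_sumr -big_split; apply: eq_bigr => i _; rewrite !mxE /=; ring.
Qed.

Lemma V_lin a (q1 q2 : homp R p) : in_Vkp lam k q1 -> in_Vkp lam k q2 -> in_Vkp lam k (a *: q1 + q2).
Proof. by move=> h1 h2 h hs hv; rewrite inner_lin h1 // h2 // mulr0 addr0. Qed.

Lemma V0 : in_Vkp lam k (0 : homp R p).
Proof. by move=> h _ _; rewrite /inner_hom big1 // => i _; rewrite mxE !mul0r. Qed.

Lemma V_sum n (c : 'I_n -> C) (v : 'I_n -> homp R p) :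
  (forall i, in_Vkp lam k (v i)) -> in_Vkp lam k (\sum_i c i *: v i).
Proof.
move=> hv; elim/big_ind: _ => [|x y hx hy|i _].
- exact: V0.
- by rewrite -[x]scale1r; apply: V_lin.
- by rewrite -[_ *: _]addr0; apply: V_lin => //; exact: V0.
Qed.

Lemma diag_zero (h : coefs R) j : (j < k)%N -> vanishes_on_diag k h ->
  \sum_(0 <= i < p.+1) ('C(i, j))%:R * h i (p - i)%N = 0.
Proof.
move=> hj hv.
have hjp : (j <= p)%N by lia.
have hj0 : (j + 0 < k)%N by rewrite addn0.
have H := hv j 0%N hj0 (p - j)%N.
rewrite (big_cat_nat (leq0n j)) /=; last lia.
rewrite big_nat_cond big1 ?add0r; last first.
  by move=> i /andP[/andP[_ hi] _]; rewrite bin_small // mul0r.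
rewrite (big_addn 0 _ j) subSn // big_mkord.
apply/(mulfI (_ : (j`!)%:R != 0 :> C)); first by rewrite pnatr_eq0 -lt0n fact_gt0.
rewrite mulr0; apply: etrans H; rewrite mulr_sumr; apply: eq_bigr => i _.
rewrite ffactn0 mulr1 addn0 -bin_ffact natrM (_ : (p - j - i = p - (i + j))%N); last lia.
ring.
Qed.

Lemma hj_in_V j : (j < k)%N -> in_Vkp lam k (hjp lam j p).
Proof.
move=> hj h _ hv; rewrite inner_nat.
apply: etrans (_ : _ = (\sum_(0 <= i < p.+1) ('C(i, j))%:R * h i (p - i)%N)^*) _; last first.
  by rewrite diag_zero // conjC0.
rewrite rmorph_sum; apply: eq_big_nat => i hi.
have hi' : (i < p.+1)%N by case/andP: hi.
rewrite rmorphM rmorph_nat /ecoord mxE (inordK hi') -/(gg (p - i)).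
by rewrite rmorphM /= rmorph_nat -(mulrA _ (rc (gg _))) ggw mulr1.
Qed.

Lemma span_V q :
  q \in <<[seq hjp lam j p | j <- iota 0 k]>>%VS -> in_Vkp lam k q.
Proof.
set S := [seq _ | _ <- _] => hq.
have := coord_span (X := in_tuple S) hq; move=> ->; apply: V_sum => i.
have hs : size S = k by rewrite size_map size_iota.
have hi : (i < k)%N by rewrite -hs ltn_ord.
rewrite /= (nth_map 0%N) ?size_iota // nth_iota // add0n; exact: hj_in_V.
Qed.

Lemma free_h : free [seq hjp lam j p | j <- iota 0 k].
Proof.
set S := [seq _ | _ <- _].
have hs : size S = k by rewrite size_map size_iota.
apply/(@freeP _ _ _ (in_tuple S)) => c hc.
suff H : forall n (i : 'I_(size S)), (i < n)%N -> c i = 0.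
  by move=> i; apply: (H i.+1).
elim=> [|n IH] i hi; first by [].
case: (ltnP i n) => hin; first exact: IH.
have ein : (i : nat) = n by lia.
have hik : (i < k)%N by rewrite -hs ltn_ord.
have hn : (n < p.+1)%N by lia.
have := congr1 (fun M : homp R p => M 0 (inord n)) hc.
rewrite /= summxE mxE (bigD1 i) //= big1 ?addr0; last first.
  move=> i' hi'; rewrite mxE (nth_map 0%N); last by rewrite size_iota -hs ltn_ord.
  rewrite nth_iota ?add0n; last by rewrite -hs ltn_ord.
  rewrite mxE (inordK hn).
  case: (ltnP i' n) => h'; first by rewrite IH // mul0r.
  rewrite bin_small ?mul0r ?rmorph0 ?mulr0 //.
  have : (i' : nat) != i by apply: contraNneq hi' => e; apply/eqP/val_inj.
  lia.
rewrite mxE (nth_map 0%N); last by rewrite size_iota -hs ltn_ord.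
rewrite nth_iota ?add0n; last by rewrite -hs ltn_ord.
rewrite mxE (inordK hn) ein binn mul1r => /eqP; rewrite mulf_eq0 => /orP[/eqP //|].
by rewrite -(rmorph0 (real_complex R)) (inj_eq (@complexI R)) gt_eqF // gg_gt0.
Qed.

Definition cm (m x : nat) : C :=
  if (m <= x)%N then (-1) ^+ (x - m) * ('C(k, x - m))%:R else 0.

Definition tf (m : nat) : coefs R :=
  fun x y => if (x + y == p)%N then cm m x else 0.

Lemma split_cm m (G : nat -> C) : (m + k <= p)%N ->
  \sum_(0 <= x < p.+1) cm m x * G x
  = \sum_(0 <= t < k.+1) (-1) ^+ t * ('C(k, t))%:R * G (t + m)%N.
Proof.
move=> hm.
rewrite (big_cat_nat (leq0n m)) /=; last lia.
rewrite big_nat_cond big1 ?add0r; last first.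
  by move=> x /andP[/andP[_ hx] _]; rewrite /cm leqNgt hx mul0r.
rewrite (big_addn 0 _ m) (big_cat_nat (leq0n k.+1)) /=; last lia.
rewrite [X in _ + X]big_nat_cond [X in _ + X]big1 ?addr0; last first.
  by move=> t /andP[/andP[ht _] _]; rewrite /cm leq_addl addnK bin_small ?mulr0 ?mul0r.
by apply: eq_big_nat => t _; rewrite /cm leq_addl addnK.
Qed.

Lemma tf_space m : in_space lam (tf m).
Proof.
apply: (box_space (B := p)) => x y h; rewrite /tf ifF //.
by apply/negbTE/eqP => E; move: h; lia.
Qed.

Lemma tf_inner m q : (m + k <= p)%N ->
  inner_hom lam q (tf m)
  = \sum_(0 <= t < k.+1) (-1) ^+ t * ('C(k, t))%:R * ecoord q (t + m)%N.
Proof.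
move=> hm; rewrite inner_nat -split_cm //; apply: eq_big_nat => x hx.
have hx' : (x <= p)%N by case/andP: hx.
rewrite /tf subnKC // eqxx mulrC; congr (_ * _).
rewrite /cm; case: ifP => _; last by rewrite conjC0.
by rewrite rmorphM rmorphXn rmorphN1 rmorph_nat.
Qed.

Lemma tf_vanish m : (m + k <= p)%N -> vanishes_on_diag k (tf m).
Proof.
move=> hm a b hab n; rewrite /tf.
case: (eqVneq (n + a + b)%N p) => hp; last first.
  rewrite big1 // => i _; have hi := ltn_ord i.
  rewrite ifF ?mul0r //; apply/negbTE/eqP => E; move/eqP: hp; apply; lia.
pose G x := cm m x * ((x ^_ a)%:R * ((p - x) ^_ b)%:R).
transitivity (\sum_(0 <= i < n.+1) G (i + a)%N).
  rewrite big_mkord; apply: eq_bigr => i _; have hi := ltn_ord i.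
  rewrite ifT; last by apply/eqP; lia.
  by rewrite /G (_ : (n - i + b = p - (i + a))%N) ?mulrA //; lia.
transitivity (\sum_(0 <= x < p.+1) G x).
  rewrite [RHS](big_cat_nat (leq0n a)) /=; last lia.
  rewrite [X in _ = X + _]big_nat_cond [X in _ = X + _]big1 ?add0r; last first.
    by move=> x /andP[/andP[_ hx] _]; rewrite /G ffact_small // mul0r mulr0.
  rewrite [RHS](big_addn 0 _ a) [RHS](big_cat_nat (leq0n n.+1)) /=; last lia.
  rewrite [X in _ = _ + X]big_nat_cond [X in _ = _ + X]big1 ?addr0 //.
  move=> i /andP[/andP[hi hi2] _]; rewrite /G (@ffact_small (p - (i + a))%N b) ?mul0r ?mulr0 //.
  lia.
transitivity (\sum_(0 <= x < p.+1) cm m x * (ffpol C a b p).[x%:R]).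
  apply: eq_big_nat => x hx; have hx' : (x <= p)%N by case/andP: hx.
  by rewrite /G ffpol_eval.
rewrite split_cm // alt_poly //.
apply: leq_trans (ffpol_size _ _ _ _) _; lia.
Qed.

Lemma tri_solve (e : nat -> C) n : exists a : nat -> C,
  forall x, (x < n)%N -> \sum_(0 <= j < n) a j * ('C(x, j))%:R = e x.
Proof.
elim: n => [|n [a ha]]; first by exists (fun _ => 0).
exists (fun j => if j == n then e n - \sum_(0 <= j < n) a j * ('C(n, j))%:R else a j).
move=> x hx; rewrite big_nat_recr //= eqxx.
rewrite (eq_big_nat _ _ (F2 := fun j => a j * ('C(x, j))%:R)); last first.
  by move=> j /andP[_ hj]; rewrite ifN // neq_ltn hj.
case: (ltnP x n) => hxn; first by rewrite ha // bin_small // mulr0 addr0.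
have -> : x = n by lia.
by rewrite binn mulr1 addrC subrK.
Qed.

Lemma V_span q : in_Vkp lam k q ->
  q \in <<[seq hjp lam j p | j <- iota 0 k]>>%VS.
Proof.
move=> hq.
have [a ha] := tri_solve (ecoord q) k.
pose r := q - \sum_(j < k) a j *: hjp lam j p.
have hr : in_Vkp lam k r.
  have -> : r = 1 *: q + \sum_(j < k) (- a j) *: hjp lam j p.
    by rewrite scale1r /r -sumrN; congr (_ + _); apply: eq_bigr => j _; rewrite scaleNr.
  by apply: V_lin => //; apply: V_sum => j; apply: hj_in_V.
have er : forall x, (x <= p)%N ->
    ecoord r x = ecoord q x - \sum_(0 <= j < k) a j * ('C(x, j))%:R.
  move=> x hx; rewrite /ecoord !mxE summxE mulrBl big_mkord mulr_suml; congr (_ - _).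
  apply: eq_bigr => j _; rewrite !mxE (inordK (_ : (x < p.+1)%N)) //.
  rewrite -/(gg (p - x)) rmorphM /= rmorph_nat -!mulrA; congr (_ * _).
  by rewrite ggw mulr1.
have er0 : forall x, (x <= p)%N -> ecoord r x = 0.
  elim/ltn_ind => x IH hx.
  case: (ltnP x k) => hxk; first by rewrite er // ha // subrr.
  have hm : ((x - k) + k <= p)%N by lia.
  have := hr (tf (x - k)) (tf_space _) (tf_vanish hm).
  rewrite tf_inner // big_nat_recr //= big1_seq ?add0r; last first.
    move=> t /andP[_]; rewrite mem_index_iota => /andP[_ ht].
    by rewrite IH ?mulr0 //; lia.
  rewrite binn mulr1 subnKC // => /eqP; rewrite mulf_eq0 signr_eq0 /=.
  by move/eqP.
have r0 : r = 0.
  apply/rowP => i; rewrite [RHS]mxE.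
  have := er0 i (ltnSE (ltn_ord i)); rewrite /ecoord inord_val => /eqP.
    by rewrite mulf_eq0 (negbTE (wn_neq0 _)) orbF => /eqP.
have -> : q = \sum_(j < k) a j *: hjp lam j p by apply/eqP; rewrite -subr_eq0 -/r r0.
apply: memv_suml => j _; apply: memvZ; apply: memv_span.
by apply/mapP; exists (nat_of_ord j); rewrite // mem_iota add0n ltn_ord.
Qed.

End Main.

Unset Implicit Arguments. Set Strict Implicit.

Theorem lemma6p3 (R : realType) (lam : R) (p k : nat) :
  0 < lam -> (k <= p.+1)%N ->
  free [seq hjp lam j p | j <- iota 0 k] /\
  (forall q : homp R p,
     in_Vkp lam k q <-> q \in <<[seq hjp lam j p | j <- iota 0 k]>>%VS).
Proof.
move=> hlam hk; split; first exact: free_h.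
move=> q; split; [exact: V_span | exact: span_V].
Qed.
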